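(* Let $0<\alpha<1$, $\sigma>0$, $N_1$ a positive integer, $h=\sigma^2\alpha^2$, $T=\sigma\alpha\sqrt{N_1}$, $\kappa=\frac\alpha{1-\alpha}$, and let $n\ge1$ be an integer. For $x\in(0,1]$ and complex $u\notin(-\infty,0]$ let $$f(u,x)=\frac{\sin(\alpha\pi)}{\alpha\pi}\frac{1}{2\sqrt u}\frac{xe^{\sqrt u-T}}{e^{\frac1\alpha(\sqrt u-T)}+x}$$ (principal branch of $\sqrt u$). Let $u^*=\frac{1+(1-2\alpha)\sqrt{4\alpha-4\alpha^2+1}}{2(1-\alpha)^2}$, $\gamma=\alpha\log\!\Big(\frac{\frac1\kappa\sqrt{u^*}+1}{\sqrt{u^*}-1}\Big)+\sqrt{u^*}$, $x^*=e^{\frac1\alpha(\gamma-T)}$, $M_0=2\max\left\{\frac{\sigma^2}{4},1+\mathrm{ceil}\!\left(\frac{9\pi^2}{\sigma^2}\right),2\,\mathrm{ceil}\!\left[\left(1+\sqrt{\pi/\sigma}\right)^4\right]\right\}$, and $\Upsilon=\{x\in[x^*,1]:(T+\alpha\log x)^2-\alpha^2\pi^2>M_0h\}$. For $x\in\Upsilon$ put $a=2\alpha\pi(T+\alpha\log x)$. Then, for each choice of sign, $$\left|\int_{h\pm2ia}^{+\infty\pm2ia}f(u,x)e^{\pm i\frac{2n\pi}{h}u}\,\mathrm{d}u\right|=e^{-\frac{4n\pi a}{h}}\left|\int_h^{+\infty}f(t\pm2ia,x)e^{\pm i\frac{2n\pi}{h}t}\,\mathrm{d}t\right|=e^{-\frac{4n\pi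 a}{h}}x^\alpha\,\mathcal{O}(1)$$ uniformly for $x\in\Upsilon$, where the constant in $\mathcal{O}(1)$ is independent of $x$, $h$, $\alpha$, $\sigma$ and $T$.
   Context: $\mathrm{ceil}(y)$ is the least integer $\ge y$. The integral $\int_{h\pm2ia}^{+\infty\pm2ia}$ is along the horizontal half-line $\{t\pm2ia:t\ge h\}$. *)

(* Defs.v *)
From Stdlib Require Import Reals.
From Coquelicot Require Import Coquelicot.
Open Scope R_scope.

Definition Cexp (z : C) : C :=
  (exp (fst z) * cos (snd z), exp (fst z) * sin (snd z)).

(* principal square root (branch cut on (-oo,0]):
   sqrt z = sqrt((|z|+Re z)/2) + i sgn(Im z) sqrt((|z|-Re z)/2) *)
Definition Csqrt (z : C) : C :=
  (sqrt ((Cmod z + fst z) / 2),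
   (if Rlt_dec (snd z) 0 then -1 else 1) * sqrt ((Cmod z - fst z) / 2)).

(* ceil(y) = least integer >= y ; Int_part is the floor *)
Definition Rceil (y : R) : R := - IZR (Int_part (- y)).

Definition fA (alpha T : R) (u : C) (x : R) : C :=
  let su := Csqrt u in
  Cmult (RtoC (sin (alpha * PI) / (alpha * PI)))
   (Cdiv (Cmult (RtoC x) (Cexp (Cminus su (RtoC T))))
         (Cmult (RtoC 2)
            (Cmult su (Cplus (Cexp (Cmult (RtoC (/ alpha)) (Cminus su (RtoC T)))) (RtoC x))))).

Definition ustar (alpha : R) : R :=
  (1 + (1 - 2 * alpha) * sqrt (4 * alpha - 4 * alpha ^ 2 + 1)) / (2 * (1 - alpha) ^ 2).

Definition gammaA (alpha : R) : R :=
  let kappa := alpha / (1 - alpha) in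
  alpha * ln ((/ kappa * sqrt (ustar alpha) + 1) / (sqrt (ustar alpha) - 1))
  + sqrt (ustar alpha).

Definition xstar (alpha T : R) : R := exp (/ alpha * (gammaA alpha - T)).

Definition M0 (sigma : R) : R :=
  2 * Rmax (sigma ^ 2 / 4)
        (Rmax (1 + Rceil (9 * PI ^ 2 / sigma ^ 2))
              (2 * Rceil ((1 + sqrt (PI / sigma)) ^ 4))).

Definition is_int_half (g : R -> C) (a : R) (l : C) : Prop :=
  is_RInt_gen g (at_point a) (Rbar_locally p_infty) l.

(* Main.v *)
Require Import Defs.
From Stdlib Require Import Reals Lra FunctionalExtensionality.
From Coquelicot Require Import Coquelicot.
Open Scope R_scope.
Lemma minus_plus_l' {G : AbelianGroup} (a b : G) : minus (plus a b) a = b.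
Proof. unfold minus. rewrite plus_comm, plus_assoc, (plus_opp_l a), plus_zero_l. reflexivity. Qed.
Lemma plus_minus' {G : AbelianGroup} (a b : G) : plus a (minus b a) = b.
Proof. unfold minus. change (@plus (AbelianGroup.AbelianMonoid G) a (@plus (AbelianGroup.AbelianMonoid G) b (opp a)) = b).
 rewrite (plus_comm b (opp a)), plus_assoc, (plus_opp_r a), plus_zero_l. reflexivity. Qed.
Lemma opp_minus' {G : AbelianGroup} (a b : G) : opp (minus a b) = minus b a.
Proof. unfold minus. change (opp (@plus (AbelianGroup.AbelianMonoid G) a (opp b)) = @plus (AbelianGroup.AbelianMonoid G) b (opp a)).
 rewrite opp_plus, opp_opp, plus_comm. reflexivity. Qed.

Lemma gen_improper {V : CompleteNormedModule R_AbsRing} (F : R -> V) (a0 K0 : R) :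
  (forall b, a0 <= b -> ex_RInt F a0 b) ->
  (forall b, a0 <= b -> norm (RInt F a0 b) <= K0) ->
  (forall eps, 0 < eps -> exists B, a0 <= B /\
       forall u v, B <= u <= v -> norm (RInt F u v) < eps) ->
  exists I, is_RInt_gen F (at_point a0) (Rbar_locally p_infty) I /\ norm I <= K0.
Proof.
intros Hex Hb Hc.
assert (Hex2 : forall u v, a0 <= u -> a0 <= v -> ex_RInt F u v).
{ intros u v Hu Hv. apply ex_RInt_Chasles with a0.
  apply ex_RInt_swap. now apply Hex. now apply Hex. }
assert (HL : exists I, filterlim (fun b => RInt F a0 b) (Rbar_locally p_infty) (locally I)).
{ apply (filterlim_locally_cauchy (F := Rbar_locally p_infty)).
  intros eps. destruct (Hc eps (cond_pos eps)) as [B [HB HBc]].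
  exists (fun b => B < b). split. now exists B.
  intros u v Hu Hv. apply (@norm_compat1 R_AbsRing V).
  assert (E: minus (RInt F a0 v) (RInt F a0 u) = RInt F u v).
  { rewrite <- (RInt_Chasles F a0 u v).
    - exact (@minus_plus_l' (CompleteNormedModule.AbelianGroup R_AbsRing V) (RInt F a0 u) (RInt F u v)).
    - apply Hex; lra.
    - apply Hex2; lra. }
  match goal with |- norm ?X < _ => replace X with (RInt F u v) by (symmetry; exact E) end.
  destruct (Rle_dec u v).
  - apply HBc; lra.
  - rewrite <- (opp_RInt_swap F v u) by (apply Hex2; lra).
    assert (Ho := @norm_opp R_AbsRing V (RInt F v u)).
    match goal with |- norm ?X < _ => replace (norm X) with (norm (RInt F v u)) by (symmetry; exact Ho) end.
    apply HBc; lra. }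
destruct HL as [I HI].
exists I. split.
- intros P HP. unfold filtermapi.
  specialize (HI P HP). destruct HI as [M HM].
  apply Filter_prod with (fun a => a = a0) (fun b => Rmax M a0 < b).
  + reflexivity.
  + now exists (Rmax M a0).
  + intros x y -> Hy. simpl. exists (RInt F a0 y). split.
    * apply RInt_correct. apply Hex. generalize (Rmax_r M a0); lra.
    * apply HM. generalize (Rmax_l M a0); lra.
- destruct (Rle_dec (norm I) K0) as [H|H]; [exact H|].
  exfalso. assert (Hp : 0 < norm I - K0) by lra.
  pose (e := mkposreal _ Hp).
  assert (HI2 := proj1 (filterlim_locally_ball_norm _ _) HI e).
  destruct HI2 as [M HM].
  pose (b := Rmax M a0 + 1).
  assert (Hbm : M < b) by (unfold b; generalize (Rmax_l M a0); lra).
  assert (Hba : a0 <= b) by (unfold b; generalize (Rmax_r M a0); lra).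
  specialize (HM b Hbm). specialize (Hb b Hba).
  unfold ball_norm in HM. simpl in HM.
  assert (T1 : norm I <= norm (RInt F a0 b) + norm (minus I (RInt F a0 b))).
  { eapply Rle_trans; [|apply (norm_triangle (RInt F a0 b) (minus I (RInt F a0 b)))].
    right. f_equal. symmetry. exact (@plus_minus' (CompleteNormedModule.AbelianGroup R_AbsRing V) _ _). }
  assert (T2 : norm (minus I (RInt F a0 b)) = norm (minus (RInt F a0 b) I)).
  { rewrite <- (@norm_opp R_AbsRing V (minus (RInt F a0 b) I)). f_equal.
    symmetry. exact (@opp_minus' (CompleteNormedModule.AbelianGroup R_AbsRing V) _ _). }
  assert (HM2 : norm (minus (RInt F a0 b) I) < norm I - K0) by exact HM. lra.
Qed.
Lemma cC_intro (f : R -> C) t :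
  continuous (fun t => fst (f t)) t -> continuous (fun t => snd (f t)) t -> continuous f t.
Proof.
intros H1 H2.
pose proof (filterlim_pair (fun t => fst (f t)) (fun t => snd (f t)) H1 H2) as H.
intros P [eps Heps].
assert (H' : locally t (fun x => P (fst (f x), snd (f x)))).
{ apply H.
  apply Filter_prod with (ball (fst (f t)) eps) (ball (snd (f t)) eps).
  - apply locally_ball.
  - apply locally_ball.
  - intros x y Hx Hy. apply Heps. destruct (f t) as [a b]. split; assumption. }
unfold filtermap. eapply filter_imp; [|exact H'].
intros x. simpl. destruct (f x); auto.
Qed.

Lemma cC_fst (f : R -> C) t : continuous f t -> continuous (fun t => fst (f t)) t.
Proof.
intros H. apply continuous_comp with (f := f) (g := @fst R R). exact H.
destruct (f t) as [a b]. apply (continuous_fst a b).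
Qed.
Lemma cC_snd (f : R -> C) t : continuous f t -> continuous (fun t => snd (f t)) t.
Proof.
intros H. apply continuous_comp with (f := f) (g := @snd R R). exact H.
destruct (f t) as [a b]. apply (continuous_snd a b).
Qed.

Lemma cont_of_derive (g : R -> R) y : ex_derive g y -> continuous g y.
Proof. intros H. now apply (ex_derive_continuous (K := R_AbsRing) (V := R_NormedModule)). Qed.

Lemma cR_mult (f g : R -> R) t : continuous f t -> continuous g t -> continuous (fun t => f t * g t) t.
Proof. intros; apply (continuous_mult f g); auto. Qed.
Lemma cR_plus (f g : R -> R) t : continuous f t -> continuous g t -> continuous (fun t => f t + g t) t.
Proof. intros; apply (continuous_plus f g); auto. Qed.
Lemma cR_minus (f g : R -> R) t : continuous f t -> continuous g t -> continuous (fun t => f t - g t) t.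
Proof. intros; apply (continuous_minus f g); auto. Qed.
Lemma cR_opp (f : R -> R) t : continuous f t -> continuous (fun t => - f t) t.
Proof. intros; apply (continuous_opp f); auto. Qed.
Lemma cR_inv (f : R -> R) t : continuous f t -> f t <> 0 -> continuous (fun t => / f t) t.
Proof. intros Hf Hn. apply (continuous_comp f Rinv). exact Hf.
 apply cont_of_derive. auto_derive. exact Hn. Qed.
Lemma cR_exp (f : R -> R) t : continuous f t -> continuous (fun t => exp (f t)) t.
Proof. intros Hf. apply (continuous_comp f exp). exact Hf.
 apply cont_of_derive. auto_derive. auto. Qed.
Lemma cR_cos (f : R -> R) t : continuous f t -> continuous (fun t => cos (f t)) t.
Proof. intros Hf. apply (continuous_comp f cos). exact Hf.
 apply cont_of_derive. auto_derive. auto. Qed.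
Lemma cR_sin (f : R -> R) t : continuous f t -> continuous (fun t => sin (f t)) t.
Proof. intros Hf. apply (continuous_comp f sin). exact Hf.
 apply cont_of_derive. auto_derive. auto. Qed.
Lemma cR_sqrt (f : R -> R) t : continuous f t -> 0 < f t -> continuous (fun t => sqrt (f t)) t.
Proof. intros Hf Hp. apply (continuous_comp f sqrt). exact Hf.
 apply cont_of_derive. auto_derive. lra. Qed.
Lemma cR_const (c : R) t : continuous (fun _ : R => c) t.
Proof. apply continuous_const. Qed.
Lemma cR_id t : continuous (fun t : R => t) t.
Proof. apply continuous_id. Qed.

Lemma cC_mult (f g : R -> C) t : continuous f t -> continuous g t -> continuous (fun t => Cmult (f t) (g t)) t.
Proof.
intros Hf Hg. apply cC_intro; simpl.
- apply cR_minus; apply cR_mult; (apply cC_fst || apply cC_snd); auto.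
- apply cR_plus; apply cR_mult; (apply cC_fst || apply cC_snd); auto.
Qed.
Lemma cC_plus (f g : R -> C) t : continuous f t -> continuous g t -> continuous (fun t => Cplus (f t) (g t)) t.
Proof.
intros Hf Hg. apply cC_intro; simpl.
- apply cR_plus; apply cC_fst; auto.
- apply cR_plus; apply cC_snd; auto.
Qed.
Lemma cC_minus (f g : R -> C) t : continuous f t -> continuous g t -> continuous (fun t => Cminus (f t) (g t)) t.
Proof.
intros Hf Hg. apply cC_intro; simpl.
- apply cR_minus; apply cC_fst; auto.
- apply cR_minus; apply cC_snd; auto.
Qed.
Lemma cC_inv (f : R -> C) t : continuous f t -> f t <> 0%C -> continuous (fun t => Cinv (f t)) t.
Proof.
intros Hf Hn.
assert (Hd : fst (f t) ^ 2 + snd (f t) ^ 2 <> 0).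
{ intro H0. apply Hn. destruct (f t) as [a b]; simpl in H0.
  assert (a = 0) by nra. assert (b = 0) by nra. subst. reflexivity. }
apply cC_intro; simpl.
- apply cR_mult. apply cC_fst; auto. apply cR_inv; auto.
  apply cR_plus; apply cR_mult; try apply cR_mult; try apply cR_const;
   (apply cC_fst || apply cC_snd); auto.
- apply cR_mult. apply cR_opp; apply cC_snd; auto. apply cR_inv; auto.
  apply cR_plus; apply cR_mult; try apply cR_mult; try apply cR_const;
   (apply cC_fst || apply cC_snd); auto.
Qed.
Lemma cC_const (c : C) t : continuous (fun _ : R => c) t.
Proof. apply continuous_const. Qed.
Lemma Cmod_Cexp z : Cmod (Cexp z) = exp (fst z).
Proof.
unfold Cmod, Cexp; cbn [fst snd].
replace ((exp (fst z) * cos (snd z)) ^ 2 + (exp (fst z) * sin (snd z)) ^ 2)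
  with (exp (fst z) ^ 2) by (assert (H1 := sin2_cos2 (snd z)); unfold Rsqr in H1; nra).
apply sqrt_pow2. apply Rlt_le, exp_pos.
Qed.

Lemma LB (E x B : R) : 0 < E -> 0 < x ->
  (0 <= cos B \/ 2 * x <= E \/ 8 * E <= 5 * x) ->
  (E + x) / 8 <= sqrt ((E * cos B + x) ^ 2 + (E * sin B) ^ 2).
Proof.
intros HE Hx Hc.
apply Rsqr_incr_0_var; [|apply sqrt_pos].
rewrite Rsqr_sqrt by (apply Rplus_le_le_0_compat; apply pow2_ge_0).
assert (Hs := sin2_cos2 B). unfold Rsqr in *.
assert (Hcb := COS_bound B).
assert (Eq : (E * cos B + x) ^ 2 + (E * sin B) ^ 2
   = E * E + 2 * E * x * cos B + x * x) by nra.
rewrite Eq.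
assert (Hm : (E + x) / 8 * ((E + x) / 8) <= (E - x) * (E - x) \/ 0 <= cos B).
{ destruct Hc as [Hc|[Hc|Hc]]; [right; exact Hc| left; nra | left; nra]. }
assert (HEx : 0 < E * x) by nra.
assert (H1 : 0 <= E * x * (cos B + 1)) by (apply Rmult_le_pos; lra).
destruct Hm as [Hm|Hm]; [nra|]. assert (0 <= E * x * cos B) by (apply Rmult_le_pos; lra). nra.
Qed.
Lemma Cmod_fA_gen (al T x Cc p v : R) :
  0 < al -> 0 < x -> 0 <= Cc -> 0 < p ->
  let E := exp ((p - T) / al) in
  let D := sqrt ((E * cos (v / al) + x) ^ 2 + (E * sin (v / al)) ^ 2) in
  0 < D ->
  Cmod (Cmult (RtoC Cc)
   (Cdiv (Cmult (RtoC x) (Cexp (Cminus (p, v) (RtoC T))))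
         (Cmult (RtoC 2)
            (Cmult (p, v) (Cplus (Cexp (Cmult (RtoC (/ al)) (Cminus (p, v) (RtoC T)))) (RtoC x))))))
  = Cc * (x * exp (p - T)) / (2 * (sqrt (p ^ 2 + v ^ 2) * D)).
Proof.
intros Hal Hx HC Hp E D HD.
assert (HZ : Cmod (Cplus (Cexp (Cmult (RtoC (/ al)) (Cminus (p, v) (RtoC T)))) (RtoC x)) = D).
{ unfold Cmod, Cexp, D, E; cbn [fst snd Cplus Cmult Cminus RtoC Copp].
  f_equal. unfold Rdiv. 
  replace (/ al * (p + - T) - 0 * (v + - 0)) with ((p - T) * / al) by ring.
  replace (/ al * (v + - 0) + 0 * (p + - T)) with (v * / al) by ring.
  ring. }
assert (Hden : Cmod (Cmult (RtoC 2) (Cmult (p, v) (Cplus (Cexp (Cmult (RtoC (/ al)) (Cminus (p, v) (RtoC T)))) (RtoC x)))) = 2 * (sqrt (p ^ 2 + v ^ 2) * D)).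
{ rewrite !Cmod_mult, HZ, Cmod_R, Rabs_pos_eq by lra. reflexivity. }
rewrite Cmod_mult, Cmod_div.
- rewrite Hden, Cmod_mult, Cmod_R, Cmod_R, Cmod_Cexp, !Rabs_pos_eq by lra.
  cbn [fst Cminus Cplus RtoC Copp]. unfold Rdiv. replace (p + - T) with (p - T) by ring. ring.
- intro H0. assert (H1 : Cmod 0%C = 0) by (rewrite Cmod_0; reflexivity).
  rewrite <- H0, Hden in H1. assert (0 < sqrt (p ^ 2 + v ^ 2)).
  { apply sqrt_lt_R0. nra. }
  nra.
Qed.
Lemma PI_gt3 : 3 < PI.
Proof. assert (H := sin_lt_x (PI/6) PI6_RGT_0). rewrite sin_PI6 in H. lra. Qed.

Definition muf k t := sqrt (t ^ 2 + k ^ 2).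
Definition pf k t := sqrt ((muf k t + t) / 2).
Definition qf k t := sqrt ((muf k t - t) / 2).

Lemma mu_facts k t : k <> 0 ->
  muf k t ^ 2 = t ^ 2 + k ^ 2 /\ 0 < muf k t /\ t < muf k t /\ - t < muf k t.
Proof.
intros Hk. unfold muf.
assert (H0 : 0 < t ^ 2 + k ^ 2) by (assert (0 < k^2) by (apply pow2_gt_0; auto); nra).
assert (Hs : sqrt (t ^ 2 + k ^ 2) ^ 2 = t ^ 2 + k ^ 2) by (apply pow2_sqrt; lra).
assert (Hp : 0 < sqrt (t ^ 2 + k ^ 2)) by (apply sqrt_lt_R0; lra).
assert (0 < k^2) by (apply pow2_gt_0; auto).
repeat split; try lra; nra.
Qed.

Lemma pq_facts k t a : 0 < a -> k ^ 2 = 4 * a ^ 2 ->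
  pf k t ^ 2 = (muf k t + t) / 2 /\ qf k t ^ 2 = (muf k t - t) / 2 /\
  0 < pf k t /\ 0 < qf k t /\ pf k t * qf k t = a.
Proof.
intros Ha0 Hka.
assert (Hk : k <> 0) by (intro; subst; nra).
destruct (mu_facts k t Hk) as [H1 [H2 [H3 H4]]].
unfold pf, qf.
assert (Ha : sqrt ((muf k t + t) / 2) ^ 2 = (muf k t + t) / 2) by (apply pow2_sqrt; lra).
assert (Hb : sqrt ((muf k t - t) / 2) ^ 2 = (muf k t - t) / 2) by (apply pow2_sqrt; lra).
assert (Hc : 0 < sqrt ((muf k t + t) / 2)) by (apply sqrt_lt_R0; lra).
assert (Hd : 0 < sqrt ((muf k t - t) / 2)) by (apply sqrt_lt_R0; lra).
repeat split; try lra.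
rewrite <- sqrt_mult by lra.
replace ((muf k t + t) / 2 * ((muf k t - t) / 2)) with (a ^ 2) by nra.
apply sqrt_pow2. lra.
Qed.

Lemma disj (al T x P a k t sg : R) : 0 < al < 1 -> 0 < x -> P = T + al * ln x ->
  a = 2 * al * PI * P -> al * PI <= P -> k ^ 2 = 4 * a ^ 2 -> (sg = 1 \/ sg = -1) ->
  0 <= cos ((sg * qf k t) / al) \/ 2 * x <= exp ((pf k t - T) / al) \/
  8 * exp ((pf k t - T) / al) <= 5 * x.
Proof.
intros Hal Hx HP Ha HPa Hk Hsg.
assert (HPI := PI_gt3).
assert (HPpos : 0 < P) by nra.
assert (Ha0 : 0 < a) by (subst a; apply Rmult_lt_0_compat; nra).
destruct (pq_facts k t a Ha0 Hk) as [Hp2 [Hq2 [Hp [Hq Hpq]]]].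
set (p := pf k t) in *. set (q := qf k t) in *.
set (y := (p - P) / al).
assert (Hy : p - P = y * al) by (unfold y; field; lra).
assert (HE : exp ((p - T) / al) = x * exp y).
{ replace ((p - T) / al) with (y + ln x) by (unfold y; rewrite HP; field; lra).
  rewrite exp_plus, exp_ln by lra. ring. }
rewrite HE.
destruct (Rle_dec (4 * P / 3) p) as [HA|HA].
{ right; left.
  assert (1 <= y) by nra.
  assert (H2 := exp_ineq1_le y). nra. }
destruct (Rle_dec p (4 * P / 5)) as [HB|HB].
{ right; right.
  assert (y <= - 3 / 5) by nra.
  assert (H2 := exp_ineq1_le (- y)).
  assert (H3 : exp y * exp (- y) = 1) by (rewrite <- exp_plus; replace (y + - y) with 0 by ring; apply exp_0).
  assert (H4 := exp_pos y). nra. }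
left.
assert (Hc : cos ((sg * q) / al) = cos (q / al)).
{ destruct Hsg as [-> | ->].
  - f_equal; field; lra.
  - rewrite <- cos_neg. f_equal; field; lra. }
rewrite Hc.
set (th := q / al - 2 * PI).
assert (Hth : th * p = 2 * PI * (P - p)).
{ unfold th. assert (q = a / p) by (field_simplify_eq; lra).
  subst q. rewrite H. rewrite Ha. field. lra. }
replace (q / al) with (th + 2 * INR 1 * PI) by (unfold th; simpl; ring).
rewrite cos_period.
apply cos_ge_0; nra.
Qed.

Lemma fA_pt (al T x P a k t : R) : 0 < al < 1 -> 0 < x -> P = T + al * ln x ->
  a = 2 * al * PI * P -> al * PI <= P -> k ^ 2 = 4 * a ^ 2 -> 0 < t ->
  Cmod (fA al T (t, k) x) <=
   4 * (sin (al * PI) / (al * PI)) * x * exp (pf k t - T) /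
     (sqrt (muf k t) * (x + exp ((pf k t - T) / al))).
Proof.
intros Hal Hx HP Ha HPa Hk Ht.
assert (HPI := PI_gt3).
assert (HPpos : 0 < P) by nra.
assert (Ha0 : 0 < a) by (subst a; apply Rmult_lt_0_compat; nra).
assert (Hk0 : k <> 0) by (intro; subst k; nra).
destruct (mu_facts k t Hk0) as [Hm1 [Hm2 [Hm3 Hm4]]].
destruct (pq_facts k t a Ha0 Hk) as [Hp2 [Hq2 [Hp [Hq Hpq]]]].
set (sg := if Rlt_dec k 0 then -1 else 1).
assert (Hsg : sg = 1 \/ sg = -1) by (unfold sg; destruct (Rlt_dec k 0); auto).
assert (Hs : Csqrt (t, k) = (pf k t, sg * qf k t)) by reflexivity.
assert (HCc : 0 <= sin (al * PI) / (al * PI)).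
{ apply Rlt_le, Rdiv_lt_0_compat. apply sin_gt_0; nra. nra. }
assert (HL := LB (exp ((pf k t - T) / al)) x ((sg * qf k t) / al) (exp_pos _) Hx
   (disj al T x P a k t sg Hal Hx HP Ha HPa Hk Hsg)).
unfold fA. cbv zeta. rewrite Hs.
assert (HD : 0 < sqrt ((exp ((pf k t - T) / al) * cos (sg * qf k t / al) + x) ^ 2 + (exp ((pf k t - T) / al) * sin (sg * qf k t / al)) ^ 2)).
{ eapply Rlt_le_trans; [|exact HL]. assert (0 < exp ((pf k t - T) / al)) by apply exp_pos; lra. }
rewrite Cmod_fA_gen by (first [lra | assumption]).
replace (pf k t ^ 2 + (sg * qf k t) ^ 2) with (muf k t) by (destruct Hsg as [-> | ->]; lra).
assert (Hsm : 0 < sqrt (muf k t)) by (apply sqrt_lt_R0; lra).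
set (E := exp ((pf k t - T) / al)) in *.
set (D := sqrt ((E * cos (sg * qf k t / al) + x) ^ 2 + (E * sin (sg * qf k t / al)) ^ 2)) in *.
assert (HE : 0 < E) by apply exp_pos.
assert (He2 : 0 < exp (pf k t - T)) by apply exp_pos.
set (Cc := sin (al * PI) / (al * PI)) in *.
set (s := sqrt (muf k t)) in *.
set (e := exp (pf k t - T)) in *.
assert (HN : 0 <= Cc * x * e) by (apply Rmult_le_pos; [apply Rmult_le_pos|]; lra).
replace (Cc * (x * e) / (2 * (s * D))) with ((Cc * x * e) * / (2 * (s * D))) by (field; lra).
replace (4 * Cc * x * e / (s * (x + E))) with ((Cc * x * e) * / (s * (x + E) / 4)) by (field; lra).
apply Rmult_le_compat_l; [exact HN|].
apply Rinv_le_contravar. apply Rmult_lt_0_compat; [|lra]. apply Rmult_lt_0_compat; lra.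
nra.
Qed.

Lemma fA_pt2 (al T x P a k t : R) : 0 < al < 1 -> 0 < x -> P = T + al * ln x ->
  a = 2 * al * PI * P -> al * PI <= P -> k ^ 2 = 4 * a ^ 2 -> 0 < t ->
  Cmod (fA al T (t, k) x) <=
   16 * (sin (al * PI) / (al * PI)) * (Rpower x al * exp (pf k t - P)) * (pf k t / (2 * muf k t)) /\
  Cmod (fA al T (t, k) x) <=
   16 * (sin (al * PI) / (al * PI)) * (Rpower x al * exp (- ((1 - al) / al) * (pf k t - P))) * (pf k t / (2 * muf k t)).
Proof.
intros Hal Hx HP Ha HPa Hk Ht.
assert (H0 := fA_pt al T x P a k t Hal Hx HP Ha HPa Hk Ht).
assert (HPI := PI_gt3).
assert (HPpos : 0 < P) by nra.
assert (Ha0 : 0 < a) by (subst a; apply Rmult_lt_0_compat; nra).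
assert (Hk0 : k <> 0) by (intro; subst k; nra).
destruct (mu_facts k t Hk0) as [Hm1 [Hm2 [Hm3 Hm4]]].
destruct (pq_facts k t a Ha0 Hk) as [Hp2 [Hq2 [Hp [Hq Hpq]]]].
assert (HCc : 0 <= sin (al * PI) / (al * PI)).
{ apply Rlt_le, Rdiv_lt_0_compat. apply sin_gt_0; nra. nra. }
set (Cc := sin (al * PI) / (al * PI)) in *.
set (p := pf k t) in *. set (mu := muf k t) in *.
assert (Hs2 : sqrt mu ^ 2 = mu) by (apply pow2_sqrt; lra).
assert (Hs : 0 < sqrt mu) by (apply sqrt_lt_R0; lra).
set (s := sqrt mu) in *.
assert (Hsp : s <= 2 * p) by nra.
set (E := exp ((p - T) / al)) in *.
set (e := exp (p - T)) in *.
assert (HE : 0 < E) by apply exp_pos.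
assert (He : 0 < e) by apply exp_pos.
assert (HR : 0 < Rpower x al) by apply exp_pos.
set (W := x * e / (x + E)).
assert (HW0 : 0 <= W) by (unfold W; apply Rlt_le, Rdiv_lt_0_compat; nra).
assert (Hb : Cmod (fA al T (t, k) x) <= 16 * Cc * W * (p / (2 * mu))).
{ eapply Rle_trans; [exact H0|].
  replace (4 * Cc * x * e / (s * (x + E))) with (4 * Cc * W / s) by (unfold W; field; lra).
  replace (16 * Cc * W * (p / (2 * mu))) with (4 * Cc * W * (2 * p / mu)) by (field; lra).
  apply Rmult_le_compat_l. apply Rmult_le_pos; [lra|exact HW0].
  apply (Rmult_le_reg_r (s * mu)). nra.
  replace (/ s * (s * mu)) with mu by (field; lra).
  replace (2 * p / mu * (s * mu)) with (2 * p * s) by (field; lra). nra. }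
assert (Hln : e = Rpower x al * exp (p - P)).
{ unfold e, Rpower. rewrite <- exp_plus. f_equal. rewrite HP. ring. }
assert (HlnE : x * e / E = Rpower x al * exp (- ((1 - al) / al) * (p - P))).
{ unfold e, E, Rpower. rewrite <- (exp_ln x) at 1 by lra.
  unfold Rdiv. rewrite <- exp_Ropp, <- !exp_plus. f_equal. rewrite HP. field. lra. }
split; eapply Rle_trans; try exact Hb.
- apply Rmult_le_compat_r. apply Rlt_le, Rdiv_lt_0_compat; lra.
  apply Rmult_le_compat_l. lra.
  rewrite <- Hln. unfold W. apply (Rmult_le_reg_r (x + E)). lra.
  replace (x * e / (x + E) * (x + E)) with (x * e) by (field; lra). nra.
- apply Rmult_le_compat_r. apply Rlt_le, Rdiv_lt_0_compat; lra.
  apply Rmult_le_compat_l. lra.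
  rewrite <- HlnE. unfold W. unfold Rdiv. apply Rmult_le_compat_l. nra.
  apply Rinv_le_contravar; lra.
Qed.
Lemma pf_derive k t : k <> 0 -> is_derive (pf k) t (pf k t / (2 * muf k t)).
Proof.
intros Hk. destruct (mu_facts k t Hk) as [H1 [H2 [H3 H4]]].
assert (Hk2 : 0 < k ^ 2) by (apply pow2_gt_0; auto).
unfold pf, muf in *.
auto_derive; replace (t * (t * 1) + k * (k * 1)) with (t ^ 2 + k ^ 2) by ring.
- split. nra. split; auto. lra.
- set (m := sqrt (t ^ 2 + k ^ 2)) in *.
  assert (Hp2 : sqrt ((m + t) / 2) ^ 2 = (m + t) / 2) by (apply pow2_sqrt; lra).
  assert (Hp : 0 < sqrt ((m + t) / 2)) by (apply sqrt_lt_R0; lra).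
  unfold Rdiv in *. set (p := sqrt ((m + t) * / 2)) in *.
  field_simplify_eq; [|split; lra]. nra.
Qed.
Lemma muf_cont k t : k <> 0 -> continuous (muf k) t.
Proof. intros Hk. apply cont_of_derive. unfold muf. auto_derive.
  assert (0 < k ^ 2) by (apply pow2_gt_0; auto). nra. Qed.
Lemma pf_cont k t : k <> 0 -> continuous (pf k) t.
Proof. intros Hk. apply cont_of_derive. eexists. now apply pf_derive. Qed.
Lemma qf_cont k t : k <> 0 -> continuous (qf k) t.
Proof. intros Hk. destruct (mu_facts k t Hk) as [H1 [H2 [H3 H4]]].
  apply (continuous_comp (fun t => (muf k t - t) / 2) sqrt).
  - apply (continuous_scal_l (fun t => muf k t - t) (/ 2)).
    apply (continuous_minus (muf k) (fun t => t)). now apply muf_cont. apply continuous_id.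
  - apply cont_of_derive. auto_derive. lra.
Qed.

Definition g1 (A P k : R) t := A * exp (pf k t - P) * (pf k t / (2 * muf k t)).
Definition G1 (A P k : R) t := A * exp (pf k t - P).
Definition g2 (A P be k : R) t := A * exp (- be * (pf k t - P)) * (pf k t / (2 * muf k t)).
Definition G2 (A P be k : R) t := - A / be * exp (- be * (pf k t - P)).

Lemma is_RInt_g1 A P k t1 t2 : k <> 0 -> is_RInt (g1 A P k) t1 t2 (G1 A P k t2 - G1 A P k t1).
Proof.
intros Hk. apply (is_RInt_derive (G1 A P k) (g1 A P k)).
- intros z _. unfold G1, g1.
  apply (is_derive_ext (fun z => A * exp (pf k z - P))); [reflexivity|].
  auto_derive. exists (pf k z / (2 * muf k z)). now apply pf_derive.
  replace (Derive (fun x : R => pf k x) z) with (pf k z / (2 * muf k z)) by (symmetry; apply is_derive_unique; apply pf_derive; auto). unfold Rminus. ring.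
- intros z _. unfold g1. destruct (mu_facts k z Hk) as [H1 [H2 [H3 H4]]].
  apply cR_mult. apply cR_mult. apply cR_const. apply cR_exp.
  apply (continuous_minus (pf k) (fun _ => P)). now apply pf_cont. apply continuous_const.
  apply cR_mult. now apply pf_cont. apply cR_inv. apply (continuous_scal_r 2 (muf k)). now apply muf_cont.
  lra.
Qed.

Lemma is_RInt_g2 A P be k t1 t2 : k <> 0 -> be <> 0 -> is_RInt (g2 A P be k) t1 t2 (G2 A P be k t2 - G2 A P be k t1).
Proof.
intros Hk Hb. apply (is_RInt_derive (G2 A P be k) (g2 A P be k)).
- intros z _. unfold G2, g2.
  auto_derive. exists (pf k z / (2 * muf k z)). now apply pf_derive.
  replace (Derive (fun x : R => pf k x) z) with (pf k z / (2 * muf k z)) by (symmetry; apply is_derive_unique; apply pf_derive; auto). unfold Rminus. field. split; auto. destruct (mu_facts k z Hk) as [_ [H2 _]]. lra.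
- intros z _. unfold g2. destruct (mu_facts k z Hk) as [H1 [H2 [H3 H4]]].
  apply cR_mult. apply cR_mult. apply cR_const. apply cR_exp.
  apply (continuous_scal_r (- be) (fun y => pf k y - P)).
  apply (continuous_minus (pf k) (fun _ => P)). now apply pf_cont. apply continuous_const.
  apply cR_mult. now apply pf_cont. apply cR_inv. apply (continuous_scal_r 2 (muf k)). now apply muf_cont.
  lra.
Qed.

Lemma cC_exp (f : R -> C) t : continuous f t -> continuous (fun t => Cexp (f t)) t.
Proof.
intros Hf. apply cC_intro; unfold Cexp; cbn [fst snd].
- apply cR_mult. apply cR_exp. now apply cC_fst. apply cR_cos. now apply cC_snd.
- apply cR_mult. apply cR_exp. now apply cC_fst. apply cR_sin. now apply cC_snd.
Qed.

Lemma Csqrt_cont k t : k <> 0 -> continuous (fun t => Csqrt (t, k)) t.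
Proof.
intros Hk. apply cC_intro.
- change (continuous (fun t => pf k t) t). now apply pf_cont.
- change (continuous (fun t => (if Rlt_dec k 0 then -1 else 1) * qf k t) t).
  apply cR_mult. apply cR_const. now apply qf_cont.
Qed.

Lemma fA_cont al T x k t : k <> 0 ->
  (Cmult (RtoC 2) (Cmult (Csqrt (t, k)) (Cplus (Cexp (Cmult (RtoC (/ al)) (Cminus (Csqrt (t, k)) (RtoC T)))) (RtoC x)))) <> 0%C ->
  continuous (fun t => fA al T (t, k) x) t.
Proof.
intros Hk Hd. unfold fA. cbv zeta.
assert (Hs := Csqrt_cont k t Hk).
apply cC_mult. apply cC_const.
unfold Cdiv. apply cC_mult.
- apply cC_mult. apply cC_const. apply cC_exp. apply cC_minus. exact Hs. apply cC_const.
- apply cC_inv; [|exact Hd].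
  apply cC_mult. apply cC_const. apply cC_mult. exact Hs.
  apply cC_plus; [|apply cC_const]. apply cC_exp. apply cC_mult. apply cC_const.
  apply cC_minus. exact Hs. apply cC_const.
Qed.

Lemma Cmod_den_gen (al T x p v : R) :
  Cmod (Cmult (RtoC 2) (Cmult (p, v) (Cplus (Cexp (Cmult (RtoC (/ al)) (Cminus (p, v) (RtoC T)))) (RtoC x))))
  = 2 * (sqrt (p ^ 2 + v ^ 2) * sqrt ((exp ((p - T) / al) * cos (v / al) + x) ^ 2 + (exp ((p - T) / al) * sin (v / al)) ^ 2)).
Proof.
rewrite !Cmod_mult, Cmod_R, Rabs_pos_eq by lra. f_equal. f_equal.
unfold Cmod, Cexp; cbn [fst snd Cplus Cmult Cminus RtoC Copp].
f_equal. unfold Rdiv.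
replace (/ al * (p + - T) - 0 * (v + - 0)) with ((p - T) * / al) by ring.
replace (/ al * (v + - 0) + 0 * (p + - T)) with (v * / al) by ring.
ring.
Qed.

Lemma den_nz (al T x P a k t : R) : 0 < al < 1 -> 0 < x -> P = T + al * ln x ->
  a = 2 * al * PI * P -> al * PI <= P -> k ^ 2 = 4 * a ^ 2 ->
  (Cmult (RtoC 2) (Cmult (Csqrt (t, k)) (Cplus (Cexp (Cmult (RtoC (/ al)) (Cminus (Csqrt (t, k)) (RtoC T)))) (RtoC x)))) <> 0%C.
Proof.
intros Hal Hx HP Ha HPa Hk.
assert (HPI := PI_gt3).
assert (HPpos : 0 < P) by nra.
assert (Ha0 : 0 < a) by (subst a; apply Rmult_lt_0_compat; nra).
destruct (pq_facts k t a Ha0 Hk) as [Hp2 [Hq2 [Hp [Hq Hpq]]]].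
set (sg := if Rlt_dec k 0 then -1 else 1).
assert (Hsg : sg = 1 \/ sg = -1) by (unfold sg; destruct (Rlt_dec k 0); auto).
assert (Hs : Csqrt (t, k) = (pf k t, sg * qf k t)) by reflexivity.
assert (HL := LB (exp ((pf k t - T) / al)) x ((sg * qf k t) / al) (exp_pos _) Hx
   (disj al T x P a k t sg Hal Hx HP Ha HPa Hk Hsg)).
rewrite Hs. intro H0.
assert (H1 : Cmod 0%C = 0) by (rewrite Cmod_0; reflexivity).
rewrite <- H0, Cmod_den_gen in H1.
assert (0 < sqrt (pf k t ^ 2 + (sg * qf k t) ^ 2)) by (apply sqrt_lt_R0; nra).
assert (0 < exp ((pf k t - T) / al)) by apply exp_pos.
nra.
Qed.

Lemma pf_le_ge (al P a k t : R) : 0 < al -> al * PI <= P -> a = 2 * al * PI * P -> k ^ 2 = 4 * a ^ 2 ->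
  (t <= P ^ 2 - 4 * al ^ 2 * PI ^ 2 -> pf k t <= P) /\
  (P ^ 2 - 4 * al ^ 2 * PI ^ 2 <= t -> P <= pf k t).
Proof.
intros Hal HPa Ha Hk.
assert (HPI := PI_gt3).
assert (HPpos : 0 < P) by nra.
assert (Ha0 : 0 < a) by (subst a; apply Rmult_lt_0_compat; nra).
assert (Hk0 : k <> 0) by (intro; subst k; nra).
destruct (mu_facts k t Hk0) as [Hm1 [Hm2 [Hm3 Hm4]]].
destruct (pq_facts k t a Ha0 Hk) as [Hp2 [Hq2 [Hp [Hq Hpq]]]].
set (p := pf k t) in *. set (mu := muf k t) in *.
assert (Hk2 : k ^ 2 = 16 * al ^ 2 * PI ^ 2 * P ^ 2) by (rewrite Hk, Ha; ring).
split; intros Ht.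
- assert (Hmu : mu <= 2 * P ^ 2 - t).
  { apply Rsqr_incr_0_var; unfold Rsqr. 2: nra. nra. }
  nra.
- assert (Hmu : 2 * P ^ 2 - t <= mu).
  { destruct (Rle_dec (2 * P ^ 2 - t) 0). lra.
    apply Rsqr_incr_0_var; unfold Rsqr. 2: lra. nra. }
  nra.
Qed.

Lemma pf_ge_sqrt k t : k <> 0 -> 0 <= t -> sqrt t <= pf k t.
Proof.
intros Hk Ht. destruct (mu_facts k t Hk) as [Hm1 [Hm2 [Hm3 Hm4]]].
unfold pf. apply sqrt_le_1_alt. lra.
Qed.

Lemma Cc_bounds al : 0 < al < 1 ->
  0 <= sin (al * PI) / (al * PI) <= 1 /\ sin (al * PI) / (al * PI) <= (1 - al) / al.
Proof.
intros Hal. assert (HPI := PI_gt3).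
assert (H1 : 0 < sin (al * PI)) by (apply sin_gt_0; nra).
assert (H2 : sin (al * PI) < al * PI) by (apply sin_lt_x; nra).
assert (H3 : sin (al * PI) < (1 - al) * PI).
{ rewrite <- sin_PI_x. replace (PI - al * PI) with ((1 - al) * PI) by ring. apply sin_lt_x; nra. }
repeat split.
- apply Rlt_le, Rdiv_lt_0_compat; nra.
- apply Rmult_le_reg_r with (al * PI). nra. field_simplify; nra.
- apply Rmult_le_reg_r with (al * PI). nra. field_simplify; try lra.
Qed.

Lemma exp_le_mono x y : x <= y -> exp x <= exp y.
Proof. intros H. destruct (Rle_lt_or_eq_dec x y H) as [H'|H']. apply Rlt_le, exp_increasing; auto. subst; lra. Qed.

Lemma normCR (z : C) : @norm R_AbsRing C_R_NormedModule z = Cmod z.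
Proof. destruct z as [a b]. unfold norm. simpl. unfold prod_norm. simpl. unfold Cmod. simpl.
f_equal. change (norm a) with (Rabs a). change (norm b) with (Rabs b).
rewrite !Rmult_1_r, <- !Rabs_mult, !Rabs_pos_eq; try nra. Qed.

Lemma main_int (al T x P a k w h : R) :
  0 < al < 1 -> 0 < x <= 1 -> P = T + al * ln x -> a = 2 * al * PI * P -> al * PI <= P ->
  k ^ 2 = 4 * a ^ 2 -> 0 < h -> h <= P ^ 2 - 4 * al ^ 2 * PI ^ 2 ->
  exists I : C, is_RInt_gen (fun t => Cmult (fA al T (t, k) x) (Cexp (0, w * t)))
     (at_point h) (Rbar_locally p_infty) I /\ Cmod I <= 32 * Rpower x al.
Proof.
intros Hal Hx HP Ha HPa Hk Hh HhP.
assert (HPI := PI_gt3).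
assert (HPpos : 0 < P) by nra.
assert (Ha0 : 0 < a) by (subst a; apply Rmult_lt_0_compat; nra).
assert (Hk0 : k <> 0) by (intro; subst k; nra).
set (F := fun t => Cmult (fA al T (t, k) x) (Cexp (0, w * t))).
set (tP := P ^ 2 - 4 * al ^ 2 * PI ^ 2) in *.
destruct (Cc_bounds al Hal) as [[HC0 HC1] HCb].
set (Cc := sin (al * PI) / (al * PI)) in *.
set (R0 := Rpower x al).
assert (HR : 0 < R0) by apply exp_pos.
set (A := 16 * Cc * R0).
set (be := (1 - al) / al) in *.
assert (Hbe : 0 < be) by (apply Rdiv_lt_0_compat; lra).
assert (HFn : forall t, Cmod (F t) = Cmod (fA al T (t, k) x)).
{ intros t. unfold F. rewrite Cmod_mult, Cmod_Cexp. simpl. rewrite exp_0. ring. }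
assert (Hcont : forall t, 0 < t -> continuous F t).
{ intros t Ht. unfold F. apply cC_mult.
  - apply fA_cont. exact Hk0. apply (den_nz al T x P a k t); auto; lra.
  - apply cC_exp. apply cC_intro; simpl. apply cR_const. apply cR_mult. apply cR_const. apply cR_id. }
assert (Hex : forall u v, 0 < u -> 0 < v -> ex_RInt (V := C_R_CompleteNormedModule) F u v).
{ intros u v Hu Hv. apply ex_RInt_continuous. intros z Hz. apply Hcont.
  assert (Rmin u v > 0) by (apply Rmin_glb_lt; lra). lra. }
assert (HB1 : forall t1 t2, h <= t1 -> t1 <= t2 -> t2 <= tP ->
   norm (RInt (V := C_R_CompleteNormedModule) F t1 t2) <= 16 * R0).
{ intros t1 t2 H1 H2 H3.
  eapply Rle_trans.
  - apply (norm_RInt_le (V := C_R_NormedModule) F (g1 A P k) t1 t2 _ (G1 A P k t2 - G1 A P k t1) H2).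
    + intros z Hz. rewrite normCR, HFn.
      destruct (fA_pt2 al T x P a k z Hal ltac:(lra) HP Ha HPa Hk ltac:(lra)) as [Hb _].
      eapply Rle_trans; [exact Hb|]. unfold g1, A. right. fold Cc. fold R0. ring.
    + apply (RInt_correct (V := C_R_CompleteNormedModule)). apply Hex; lra.
    + apply is_RInt_g1. exact Hk0.
  - unfold G1. destruct (pf_le_ge al P a k t2 ltac:(lra) HPa Ha Hk) as [Hle _].
    assert (Hp2 := Hle H3).
    assert (exp (pf k t2 - P) <= 1) by (rewrite <- exp_0; apply exp_le_mono; lra).
    assert (0 < exp (pf k t1 - P)) by apply exp_pos.
    unfold A. assert (0 <= Cc * R0) by nra. nra. }
assert (HB2 : forall t1 t2, tP <= t1 -> t1 <= t2 ->
   norm (RInt (V := C_R_CompleteNormedModule) F t1 t2) <= 16 * R0 * exp (- be * (pf k t1 - P))).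
{ intros t1 t2 H1 H2.
  eapply Rle_trans.
  - apply (norm_RInt_le (V := C_R_NormedModule) F (g2 A P be k) t1 t2 _ (G2 A P be k t2 - G2 A P be k t1) H2).
    + intros z Hz. rewrite normCR, HFn.
      destruct (fA_pt2 al T x P a k z Hal ltac:(lra) HP Ha HPa Hk ltac:(lra)) as [_ Hb].
      eapply Rle_trans; [exact Hb|]. unfold g2, A. right. fold Cc. fold R0. fold be. ring.
    + apply (RInt_correct (V := C_R_CompleteNormedModule)). apply Hex; lra.
    + apply is_RInt_g2. exact Hk0. lra.
  - unfold G2.
    assert (0 < exp (- be * (pf k t2 - P))) by apply exp_pos.
    assert (0 < exp (- be * (pf k t1 - P))) by apply exp_pos.
    assert (HAb : A / be <= 16 * R0).
    { unfold A. apply Rmult_le_reg_r with be. lra. field_simplify; try lra.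
      assert (Cc * R0 <= be * R0) by (apply Rmult_le_compat_r; lra). nra. }
    assert (0 <= A / be) by (unfold A; apply Rmult_le_pos; [|apply Rlt_le, Rinv_0_lt_compat; lra]; nra).
    replace (- A / be * exp (- be * (pf k t2 - P)) - - A / be * exp (- be * (pf k t1 - P)))
      with (A / be * exp (- be * (pf k t1 - P)) - A / be * exp (- be * (pf k t2 - P))) by (field; lra).
    nra. }
destruct (gen_improper (V := C_R_CompleteNormedModule) F h (32 * R0)) as [I [HI HIn]].
- intros b Hb. apply Hex; lra.
- intros b Hb. destruct (Rle_dec b tP) as [Hbt|Hbt].
  + eapply Rle_trans. apply HB1; lra. lra.
  + rewrite <- (RInt_Chasles (V := C_R_CompleteNormedModule) F h tP b) by (apply Hex; lra).
    eapply Rle_trans. apply (norm_triangle (V := C_R_NormedModule)).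
    assert (H1 := HB1 h tP ltac:(lra) ltac:(lra) ltac:(lra)).
    assert (H2 := HB2 tP b ltac:(lra) ltac:(lra)).
    destruct (pf_le_ge al P a k tP ltac:(lra) HPa Ha Hk) as [_ Hge].
    assert (exp (- be * (pf k tP - P)) <= 1).
    { rewrite <- exp_0. apply exp_le_mono. assert (P <= pf k tP) by (apply Hge; apply Rle_refl). nra. }
    assert (16 * R0 * exp (- be * (pf k tP - P)) <= 16 * R0) by nra.
    eapply Rle_trans; [apply Rplus_le_compat; [exact H1 | exact H2]|]. lra.
- intros eps Heps.
  set (Z := Rabs (ln (16 * R0 / eps)) + 1).
  set (B := Rmax tP ((P + Z / be) ^ 2)).
  exists B. split. unfold B. eapply Rle_trans; [|apply Rmax_l]. lra.
  intros u v [Hu Huv].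
  assert (HuB1 : tP <= u) by (eapply Rle_trans; [apply Rmax_l|exact Hu]).
  assert (HuB2 : (P + Z / be) ^ 2 <= u) by (eapply Rle_trans; [apply Rmax_r|exact Hu]).
  eapply Rle_lt_trans. apply HB2; lra.
  assert (HZ0 : 0 < Z) by (unfold Z; assert (0 <= Rabs (ln (16 * R0 / eps))) by apply Rabs_pos; lra).
  assert (Hsu : P + Z / be <= sqrt u).
  { rewrite <- (sqrt_pow2 (P + Z / be)). apply sqrt_le_1_alt. exact HuB2.
    assert (0 < Z / be) by (apply Rdiv_lt_0_compat; lra). lra. }
  assert (Hpu := pf_ge_sqrt k u Hk0 ltac:(lra)).
  assert (Hy : Z <= be * (pf k u - P)).
  { replace Z with (be * (Z / be)) by (field; lra). apply Rmult_le_compat_l; lra. }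
  assert (Hln : ln (16 * R0 / eps) < Z).
  { unfold Z. assert (H := Rle_abs (ln (16 * R0 / eps))). lra. }
  assert (Hex2 : 16 * R0 / eps < exp (be * (pf k u - P))).
  { rewrite <- (exp_ln (16 * R0 / eps)) by (apply Rdiv_lt_0_compat; lra).
    apply exp_increasing. lra. }
  assert (He : exp (- be * (pf k u - P)) * exp (be * (pf k u - P)) = 1).
  { rewrite <- exp_plus. replace (- be * (pf k u - P) + be * (pf k u - P)) with 0 by ring. apply exp_0. }
  assert (0 < exp (- be * (pf k u - P))) by apply exp_pos.
  apply (Rmult_lt_reg_r (exp (be * (pf k u - P)))). apply exp_pos.
  replace (16 * R0 * exp (- be * (pf k u - P)) * exp (be * (pf k u - P))) with (16 * R0) by (rewrite Rmult_assoc, He; ring).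
  apply (Rmult_lt_compat_l eps) in Hex2; [|lra].
  replace (eps * (16 * R0 / eps)) with (16 * R0) in Hex2 by (field; lra). lra.
- exists I. split. exact HI. rewrite <- normCR. exact HIn.
Qed.

Lemma gamma_nonneg al : 0 < al < 1 -> 0 <= gammaA al.
Proof.
intros Hal. unfold gammaA. cbv zeta.
set (u := ustar al). set (su := sqrt u).
assert (Hsu0 : 0 <= su) by apply sqrt_pos.
replace (/ (al / (1 - al))) with ((1 - al) / al) by (field; lra).
destruct (Rle_dec su 1) as [Hs1|Hs1].
- assert (Hn : ln (((1 - al) / al * su + 1) / (su - 1)) = 0).
  { unfold ln. destruct (Rlt_dec 0 _) as [Hp|]; [|reflexivity]. exfalso.
    assert (0 <= (1 - al) / al * su) by (apply Rmult_le_pos; [apply Rlt_le, Rdiv_lt_0_compat|]; lra).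
    destruct (Rle_lt_or_eq_dec _ _ Hs1) as [Hlt|Heq].
    - assert (Hq : ((1 - al) / al * su + 1) / (su - 1) < 0).
      { unfold Rdiv at 2. apply Rmult_pos_neg. lra. apply Rinv_lt_0_compat. lra. }
      lra.
    - rewrite Heq in Hp. replace (1 - 1) with 0 in Hp by ring. unfold Rdiv in Hp.
      rewrite Rinv_0, Rmult_0_r in Hp. lra. }
  rewrite Hn. lra.
- assert (Hu : su ^ 2 = u).
  { unfold su. apply pow2_sqrt. destruct (Rle_dec 0 u) as [|Hn]; auto.
    exfalso. unfold su in Hs1. rewrite sqrt_neg_0 in Hs1; lra. }
  assert (Hkey : su * (2 * al - 1) <= 2 * al).
  { destruct (Rle_dec (2 * al - 1) 0). nra.
    set (m := 2 * al - 1) in *.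
    set (D := sqrt (4 * al - 4 * al ^ 2 + 1)).
    assert (HD2 : D ^ 2 = 2 - m ^ 2) by (unfold D, m; rewrite pow2_sqrt; [ring| nra]).
    assert (HD0 : 0 <= D) by apply sqrt_pos.
    assert (Hm1 : m < 1) by (unfold m; lra).
    assert (Hu2 : u * (2 * (1 - al) ^ 2) = 1 + (1 - 2 * al) * D).
    { unfold u, ustar. fold D. field. lra. }
    assert (H1 : 2 * m ^ 2 <= 1 + m * D).
    { destruct (Rle_dec (2 * m ^ 2) 1). nra.
      assert (Hsq : (2 * m ^ 2 - 1) ^ 2 <= (m * D) ^ 2).
      { rewrite Rpow_mult_distr, HD2. assert (0 <= (5 * m ^ 2 - 1) * (1 - m ^ 2)) by (apply Rmult_le_pos; nra). nra. }
      assert (0 <= m * D) by nra. 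
      assert (2 * m ^ 2 - 1 <= m * D) by (apply Rsqr_incr_0_var; [unfold Rsqr; nra | lra]). nra. }
    assert (H2 : (1 - m * D) * (1 + m * D) = (1 - m ^ 2) ^ 2).
    { replace ((1 - m * D) * (1 + m * D)) with (1 - m ^ 2 * D ^ 2) by ring. rewrite HD2. ring. }
    assert (H3 : 2 * m ^ 2 * (1 - m * D) <= (1 - m ^ 2) ^ 2).
    { assert (0 < 1 + m * D) by nra.
      apply (Rmult_le_reg_r (1 + m * D)); [lra|].
      replace (2 * m ^ 2 * (1 - m * D) * (1 + m * D)) with (2 * m ^ 2 * ((1 - m * D) * (1 + m * D))) by ring.
      rewrite H2. assert (0 <= (1 - m ^ 2) ^ 2) by apply pow2_ge_0. nra. }
    assert (H4 : u * m ^ 2 <= (2 * al) ^ 2).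
    { assert (Hal2 : 0 < 2 * (1 - al) ^ 2) by nra.
      apply (Rmult_le_reg_r (2 * (1 - al) ^ 2)); [lra|].
      replace (u * m ^ 2 * (2 * (1 - al) ^ 2)) with (u * (2 * (1 - al) ^ 2) * m ^ 2) by ring.
      rewrite Hu2. replace (1 - 2 * al) with (- m) by (unfold m; ring).
      replace al with ((1 + m) / 2) by (unfold m; field).
      replace ((2 * ((1 + m) / 2)) ^ 2 * (2 * (1 - (1 + m) / 2) ^ 2)) with ((1 - m ^ 2) ^ 2 / 2) by field.
      nra. }
    apply Rsqr_incr_0_var; unfold Rsqr; nra. }
  assert (HL : 1 <= ((1 - al) / al * su + 1) / (su - 1)).
  { apply (Rmult_le_reg_r (su - 1)). lra.
    replace (((1 - al) / al * su + 1) / (su - 1) * (su - 1)) with ((1 - al) / al * su + 1) by (field; lra).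
    rewrite Rmult_1_l.
    apply (Rmult_le_reg_r al). lra.
    replace (((1 - al) / al * su + 1) * al) with ((1 - al) * su + al) by (field; lra). nra. }
  assert (0 <= ln (((1 - al) / al * su + 1) / (su - 1))).
  { rewrite <- ln_1. apply ln_le; lra. }
  nra.
Qed.

Lemma M0_bound sigma : 0 < sigma -> 2 + 18 * PI ^ 2 / sigma ^ 2 <= M0 sigma.
Proof.
intros Hs. unfold M0.
assert (Hc : 9 * PI ^ 2 / sigma ^ 2 <= Rceil (9 * PI ^ 2 / sigma ^ 2)).
{ unfold Rceil. destruct (base_Int_part (- (9 * PI ^ 2 / sigma ^ 2))). lra. }
assert (H1 := Rmax_r (sigma ^ 2 / 4) (Rmax (1 + Rceil (9 * PI ^ 2 / sigma ^ 2)) (2 * Rceil ((1 + sqrt (PI / sigma)) ^ 4)))).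
assert (H2 := Rmax_l (1 + Rceil (9 * PI ^ 2 / sigma ^ 2)) (2 * Rceil ((1 + sqrt (PI / sigma)) ^ 4))).
lra.
Qed.

Lemma Cmod_scal (e : R) (z : C) : 0 <= e -> Cmod (@scal R_Ring C_R_ModuleSpace e z) = e * Cmod z.
Proof.
intros He. destruct z as [u v]. unfold Cmod. simpl.
unfold scal; simpl. unfold prod_scal; simpl. unfold scal; simpl. unfold mult; simpl.
replace (e * u * (e * u * 1) + e * v * (e * v * 1)) with (e ^ 2 * (u * (u * 1) + v * (v * 1))) by ring.
rewrite sqrt_mult. rewrite sqrt_pow2 by lra. reflexivity. apply pow2_ge_0. nra.
Qed.

Theorem lemmaA3 :
  forall n : nat, (1 <= n)%nat ->
  exists K : R,
  forall (alpha sigma : R) (N1 : nat) (x s : R),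
    0 < alpha < 1 -> 0 < sigma -> (1 <= N1)%nat ->
    (s = 1 \/ s = -1) ->
    let h := sigma ^ 2 * alpha ^ 2 in
    let T := sigma * alpha * sqrt (INR N1) in
    xstar alpha T <= x <= 1 ->
    (T + alpha * ln x) ^ 2 - alpha ^ 2 * PI ^ 2 > M0 sigma * h ->
    let a := 2 * alpha * PI * (T + alpha * ln x) in
    let c := 2 * INR n * PI / h in
    exists I1 I2 : C,
      is_int_half
        (fun t => Cmult (fA alpha T (t, s * 2 * a) x)
                        (Cexp (Cmult (0, s * c) (t, s * 2 * a)))) h I1 /\
      is_int_half
        (fun t => Cmult (fA alpha T (t, s * 2 * a) x)
                        (Cexp (0, s * c * t))) h I2 /\
      Cmod I1 = exp (- (4 * INR n * PI * a / h)) * Cmod I2 /\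
      Cmod I2 <= K * Rpower x alpha.
Proof.
intros n Hn. exists 32.
intros al sigma N1 x s Hal Hsig HN1 Hs h T Hx HM a c.
assert (HPI := PI_gt3).
assert (Hx0 : 0 < x) by (eapply Rlt_le_trans; [apply exp_pos | apply Hx]).
set (P := T + al * ln x) in *.
assert (HPg : gammaA al <= P).
{ unfold P. assert (H1 : ln (xstar al T) <= ln x) by (apply ln_le; [apply exp_pos | apply Hx]).
  unfold xstar in H1. rewrite ln_exp in H1.
  assert (H2 : al * (/ al * (gammaA al - T)) <= al * ln x) by (apply Rmult_le_compat_l; lra).
  replace (al * (/ al * (gammaA al - T))) with (gammaA al - T) in H2 by (field; lra). lra. }
assert (Hg := gamma_nonneg al Hal).
assert (Hh : 0 < h) by (unfold h; apply Rmult_lt_0_compat; apply pow_lt; lra).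
assert (HM0 := M0_bound sigma Hsig).
assert (HMh : 2 * h + 18 * PI ^ 2 * al ^ 2 <= M0 sigma * h).
{ replace (2 * h + 18 * PI ^ 2 * al ^ 2) with ((2 + 18 * PI ^ 2 / sigma ^ 2) * h)
    by (unfold h; field; lra).
  apply Rmult_le_compat_r; lra. }
assert (HP2 : P ^ 2 > 19 * al ^ 2 * PI ^ 2 + 2 * h) by lra.
assert (HPpos : 0 < P).
{ destruct (Rle_lt_or_eq_dec 0 P ltac:(lra)) as [|He]; auto. rewrite <- He in HP2. nra. }
assert (HPa : al * PI <= P).
{ apply Rsqr_incr_0_var; unfold Rsqr; nra. }
assert (Hss : s * s = 1) by (destruct Hs as [-> | ->]; ring).
assert (Hk : (s * 2 * a) ^ 2 = 4 * a ^ 2) by (replace ((s * 2 * a) ^ 2) with ((s * s) * 4 * a ^ 2) by ring; rewrite Hss; ring).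
destruct (main_int al T x P a (s * 2 * a) (s * c) h Hal ltac:(lra) eq_refl eq_refl HPa Hk Hh ltac:(nra))
  as [I2 [HI2 HI2n]].
set (e := exp (- (4 * INR n * PI * a / h))).
exists (@scal R_Ring C_R_ModuleSpace e I2), I2.
split; [|split; [exact HI2|split; [|exact HI2n]]].
- unfold is_int_half.
  assert (Hfe : (fun t => Cmult (fA al T (t, s * 2 * a) x) (Cexp (Cmult (0, s * c) (t, s * 2 * a))))
     = (fun t => @scal R_Ring C_R_ModuleSpace e (Cmult (fA al T (t, s * 2 * a) x) (Cexp (0, s * c * t))))).
  { apply functional_extensionality. intros t.
    destruct (fA al T (t, s * 2 * a) x) as [f1 f2].
    unfold Cexp, Cmult, e. simpl. unfold scal; simpl. unfold prod_scal; simpl. unfold scal; simpl. unfold mult; simpl.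
    replace (0 * t - s * c * (s * 2 * a)) with (- (4 * INR n * PI * a / h)).
    2:{ replace (0 * t - s * c * (s * 2 * a)) with (- ((s * s) * 2 * a * c)) by ring. rewrite Hss.
        unfold c. field. lra. }
    replace (0 * (s * 2 * a) + s * c * t) with (s * c * t) by ring.
    rewrite exp_0. f_equal; ring. }
  rewrite Hfe. apply (is_RInt_gen_scal (V := C_R_NormedModule)). exact HI2.
- apply Cmod_scal. apply Rlt_le, exp_pos.
Qed.
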